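(* Let $V\in\mathcal C^\infty(\mathbb R^d,\mathbb R)$ and suppose there exist $C>0$ and a compact set $K\subset\mathbb R^d$ such that for all $x\in\mathbb R^d\setminus K$, $$V(x)\ge -C,\qquad |\nabla V(x)|\ge \tfrac1C,\qquad |\Delta V(x)|\le C|\nabla V(x)|^2 .$$ Then there exists $b\in\mathbb R$ such that for all $x\in\mathbb R^d$, $V(x)\ge \frac1C|x|+b$, with $C$ the constant above. *)

(* Defs.v *)
From HB Require Import structures.
From mathcomp Require Import all_boot all_order all_algebra.
From mathcomp Require Import all_classical all_reals all_analysis.
Set Implicit Arguments. Unset Strict Implicit. Unset Printing Implicit Defensive.
Import Order.TTheory GRing.Theory Num.Theory.
Import numFieldNormedType.Exports.
Local Open Scope ring_scope.
Local Open Scope classical_set_scope.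

(* Euclidean norm on R^d (the library's norm on matrices is the sup norm). *)
Definition enorm (R : realType) (d : nat) (x : 'rV[R]_d) : R :=
  Num.sqrt (\sum_(i < d) (x ord0 i) ^+ 2).

Definition evec (R : realType) (d : nat) (i : 'I_d) : 'rV[R]_d := delta_mx ord0 i.

Fixpoint iterD (R : realType) (d : nat) (vs : seq 'rV[R]_d)
    (f : 'rV[R]_d -> R) : 'rV[R]_d -> R :=
  match vs with
  | [::] => f
  | v :: vs' => fun x => derive (iterD vs' f) x v
  end.

Definition smooth (R : realType) (d : nat) (f : 'rV[R]_d -> R) : Prop :=
  forall (vs : seq 'rV[R]_d) (x : 'rV[R]_d), differentiable (iterD vs f) x.

Definition grad (R : realType) (d : nat) (f : 'rV[R]_d -> R) (x : 'rV[R]_d)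
  : 'rV[R]_d := \row_(i < d) derive f x (@evec R d i).

Definition laplacian (R : realType) (d : nat) (f : 'rV[R]_d -> R)
    (x : 'rV[R]_d) : R :=
  \sum_(i < d) derive (fun y => derive f y (@evec R d i)) x (@evec R d i).

(* Main.v *)
Require Import Defs.
From HB Require Import structures.
From mathcomp Require Import all_boot all_order all_algebra.
From mathcomp Require Import all_classical all_reals all_analysis.
From mathcomp Require Import ring lra.
Import Order.TTheory GRing.Theory Num.Theory.
Import numFieldNormedType.Exports.
Local Open Scope ring_scope.
Local Open Scope classical_set_scope.

Section H.
Context {R : realType} {d : nat}.
Implicit Types x y : 'rV[R]_d.

Lemma sumsq_ge0 x : 0 <= \sum_(i < d) (x ord0 i) ^+ 2.
Proof. by apply: sumr_ge0 => i _; rewrite sqr_ge0. Qed.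

Lemma enorm_ge0 x : 0 <= enorm x.
Proof. exact: sqrtr_ge0. Qed.

Lemma enorm_sq x : enorm x ^+ 2 = \sum_(i < d) (x ord0 i) ^+ 2.
Proof. by rewrite /enorm sqr_sqrtr // sumsq_ge0. Qed.

Lemma coord_le_enorm x i : `|x ord0 i| <= enorm x.
Proof.
rewrite -(ler_pXn2r (n:=2)) //= ?nnegrE ?enorm_ge0 // enorm_sq real_normK ?num_real //.
rewrite (bigD1 i) //= lerDl; apply: sumr_ge0 => j _; exact: sqr_ge0.
Qed.

Lemma enormN x : enorm (- x) = enorm x.
Proof. by rewrite /enorm; congr Num.sqrt; apply: eq_bigr => i _; rewrite mxE sqrrN. Qed.

Lemma enormZ (t : R) x : enorm (t *: x) = `|t| * enorm x.
Proof.
rewrite /enorm -sqrtr_sqr -sqrtrM ?sqr_ge0 // mulr_sumr; congr Num.sqrt.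
by apply: eq_bigr => i _; rewrite mxE exprMn.
Qed.

Lemma cs x y : \sum_(i < d) x ord0 i * y ord0 i <= enorm x * enorm y.
Proof.
set a := enorm x; set b := enorm y.
have a0 : 0 <= a by exact: enorm_ge0.
have b0 : 0 <= b by exact: enorm_ge0.
have key : (\sum_(i < d) x ord0 i * y ord0 i) * (a * b) *+ 2 <= (a * b) ^+ 2 *+ 2.
  have -> : (a * b) ^+ 2 *+ 2 = \sum_(i < d) ((x ord0 i * b) ^+ 2 + (y ord0 i * a) ^+ 2).
    rewrite big_split /=.
    rewrite (eq_bigr (fun i => x ord0 i ^+ 2 * b ^+ 2)); last by move=> i _; rewrite exprMn.
    rewrite [X in _ = _ + X](eq_bigr (fun i => y ord0 i ^+ 2 * a ^+ 2)); last by move=> i _; rewrite exprMn.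
    rewrite -!mulr_suml -!enorm_sq -/a -/b exprMn; lra.
  rewrite mulr_suml -sumrMnl; apply: ler_sum => i _.
  set u := x ord0 i; set v := y ord0 i.
  have := sqr_ge0 (u * b - v * a); rewrite sqrrB (_ : u * b * (v * a) = u * v * (a * b)); first lra; by rewrite mulrACA [b * _]mulrC.
have [ab0|abp] := eqVneq (a * b) 0.
  move: ab0 => /eqP; rewrite mulf_eq0 => /orP[] /eqP H.
    have Hx : forall i, x ord0 i = 0.
      move=> i; apply/eqP; rewrite -normr_le0 -H; exact: coord_le_enorm.
    by rewrite H mul0r big1 // => i _; rewrite Hx mul0r.
  have Hy : forall i, y ord0 i = 0.
    move=> i; apply/eqP; rewrite -normr_le0 -H; exact: coord_le_enorm.
  by rewrite H mulr0 big1 // => i _; rewrite Hy mulr0.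
have abg : 0 < a * b by rewrite lt_def abp mulr_ge0.
move: key; set s := \sum_(i < d) _; rewrite ler_pMn2r // expr2 => key.
by rewrite -(ler_pM2r abg).
Qed.

Lemma enormD x y : enorm (x + y) <= enorm x + enorm y.
Proof.
rewrite -(ler_pXn2r (n:=2)) //= ?nnegrE ?addr_ge0 ?enorm_ge0 //.
rewrite enorm_sq sqrrD !enorm_sq.
have -> : \sum_(i < d) (x + y) ord0 i ^+ 2 = \sum_(i < d) x ord0 i ^+ 2 +
   (\sum_(i < d) x ord0 i * y ord0 i) *+ 2 + \sum_(i < d) y ord0 i ^+ 2.
  rewrite -sumrMnl -!big_split /=; apply: eq_bigr => i _; rewrite mxE sqrrD; lra.
have := cs x y; lra.
Qed.


Lemma cont_sum (T : topologicalType) (I : Type) (s : seq I) (F : I -> T -> R) :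
  (forall i, continuous (F i)) -> continuous (fun t => \sum_(i <- s) F i t).
Proof.
move=> Fc; elim: s => [|i s IH].
  rewrite (_ : (fun _ => _) = cst 0); first exact: cst_continuous.
  by apply: funext => t; rewrite big_nil.
rewrite (_ : (fun _ => _) = (fun t => F i t + \sum_(j <- s) F j t)).
  by move=> t; apply: continuousD; [exact: Fc | exact: IH].
by apply: funext => t; rewrite big_cons.
Qed.

Lemma enorm_cont : continuous (@enorm R d).
Proof.
move=> x; apply: (continuous_comp _ (@sqrt_continuous R _)).
apply: (@cont_sum _ _ _ (fun i (y : 'rV[R]_d) => y ord0 i ^+ 2)) => i y.
apply: (continuous_comp _ (@exprn_continuous R 2 _)); exact: coord_continuous.
Qed.

Lemma derive_grad (f : 'rV[R]_d -> R) z : differentiable f z ->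
  derive f z (- grad f z) = - enorm (grad f z) ^+ 2.
Proof.
move=> df; rewrite deriveE // linearN /= enorm_sq; congr (- _).
rewrite {1}[grad f z]row_sum_delta linear_sum /=; apply: eq_bigr => j _.
rewrite linearZ /= -deriveE // expr2; congr (_ * _).
by rewrite /grad mxE.
Qed.

Lemma derive_right_ge (f : 'rV[R]_d -> R) z v c : differentiable f z ->
  (forall h : R, 0 < h -> c <= h^-1 * (f (h *: v + z) - f z)) -> c <= derive f z v.
Proof.
move=> df H.
have /cvg_ex[l Hl] : derivable f z v by exact: diff_derivable.
have -> : derive f z v = l by exact: cvg_lim.
have Hr : (fun h : R => h^-1 *: ((f \o shift z) (h *: v) - f z)) @ 0^'+ --> l.
  move=> A /Hl /nbhs_ballP [_ /posnumP[e] xe_A].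
  by exists e%:num => //= y xe_y; rewrite lt_def => /andP [xney _]; apply: xe_A.
apply: (cvgr_to_ge Hr); near=> h; apply: H.
by near: h; exact: nbhs_right_gt.
Unshelve. all: by end_near.
Qed.

Lemma enorm0 : enorm (0 : 'rV[R]_d) = 0.
Proof. by rewrite /enorm big1 ?sqrtr0 // => i _; rewrite mxE expr0n. Qed.

End H.

Theorem lemma1 (R : realType) (d : nat) (V : 'rV[R]_d -> R)
  (C : R) (K : set 'rV[R]_d) :
  smooth V -> 0 < C -> compact K ->
  (forall x, ~ K x ->
     [/\ - C <= V x, C^-1 <= enorm (grad V x)
       & `|laplacian V x| <= C * enorm (grad V x) ^+ 2]) ->
  exists b : R, forall x : 'rV[R]_d, C^-1 * enorm x + b <= V x.
Proof.
move=> sV C0 cK H.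
have dV : forall x, differentiable V x := fun x => sV [::] x.
have cV : continuous V := fun x => differentiable_continuous (dV x).
have [m [r [r0 HK]]] : exists m r, 0 <= r /\ forall y, K y -> m <= V y /\ enorm y <= r.
  case: (pselect (K !=set0)) => [Kn|K0].
  - have [c _ cmin] := EVT_min_rV Kn cK (continuous_subspaceT cV).
    have [c' _ cmax] := EVT_max_rV Kn cK (continuous_subspaceT (@enorm_cont R d)).
    exists (V c), (Num.max 0 (enorm c')); split; first by rewrite le_max lexx.
    move=> y Ky; split; first by apply: cmin; rewrite inE.
    by rewrite le_max; apply/orP; right; apply: cmax; rewrite inE.
  - by exists 0, 0; split => // y Ky; exfalso; apply: K0; exists y.
pose L := Num.max C (- m).
have VL : forall z, - L <= V z.
  move=> z; rewrite /L oppr_max opprK ge_min; apply/orP.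
  case: (pselect (K z)) => Kz; first by right; exact: (HK z Kz).1.
  by left; have [] := H z Kz.
have main : forall a x0, 0 < a -> a < C^-1 ->
    exists y, K y /\ V y + a * enorm (y - x0) <= V x0.
  move=> a x0 a0 aC.
  pose f z := V z + a * enorm (z - x0).
  have fc : continuous f.
    have ce : continuous (fun z : 'rV[R]_d => enorm (z - x0)).
      move=> z; apply: (continuous_comp (f:=fun z : 'rV[R]_d => z - x0)); last exact: enorm_cont.
      exact: (cvgD cvg_id (cvg_cst (- x0))).
    move=> z; apply: (@continuousD _ _ _ V (fun z => a * enorm (z - x0))); first exact: cV.
    apply: (continuous_comp (ce z)); exact: mulrl_continuous.
  pose rho := enorm x0 + (V x0 + L) / a + 1.
  have rhoE : enorm x0 < rho.
    rewrite /rho -addrA ltrDl; apply: ltr_wpDl; last exact: ltr01.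
    by apply: divr_ge0; [have := VL x0; lra | exact: ltW].
  pose A := [set v : 'rV[R]_d | forall i, `[-rho, rho]%classic (v ord0 i)].
  have cA : compact A := @rV_compact _ d (fun=> `[-rho, rho]%classic) (fun=> @segment_compact R (-rho) rho).
  have x0A : A x0.
    move=> i /=; rewrite in_itv /= -ler_norml.
    apply: le_trans (ltW rhoE); exact: coord_le_enorm.
  have [z zA zmin] := EVT_min_rV (ex_intro _ x0 x0A) cA (continuous_subspaceT fc).
  have fx0 : f x0 = V x0 by rewrite /f subrr enorm0 mulr0 addr0.
  have fzx0 : f z <= V x0 by rewrite -fx0; apply: zmin; rewrite inE.
  have gmin : forall w, f z <= f w.
    move=> w; case: (pselect (A w)) => Aw; first by apply: zmin; rewrite inE.
    move/existsNP: Aw => [i Hi].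
    have Ew : rho < enorm w.
      apply: (lt_le_trans _ (coord_le_enorm w i)).
      by rewrite ltNge ler_norml; apply/negP => Hw; apply: Hi; rewrite /= in_itv.
    have tri : enorm w - enorm x0 <= enorm (w - x0).
      have := enormD (w - x0) x0; rewrite subrK; lra.
    have e1 : a * (rho - enorm x0) = V x0 + L + a.
      by rewrite /rho; field; rewrite gt_eqF.
    have e2 : a * (rho - enorm x0) < a * enorm (w - x0).
      by rewrite ltr_pM2l //; lra.
    have := VL w; move: fzx0; rewrite /f; lra.
  case: (pselect (K z)) => Kz; first by exists z.
  exfalso; have [_ hg _] := H z Kz.
  set g := grad V z in hg.
  have gpos : 0 < enorm g by apply: lt_le_trans hg; rewrite invr_gt0.
  have key : - (a * enorm (- g)) <= derive V z (- g).
    apply: derive_right_ge => // h h0.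
    rewrite ler_pdivlMl //.
    have := gmin (h *: - g + z); rewrite /f.
    have := enormD (h *: - g) (z - x0); rewrite enormZ gtr0_norm // addrA.
    move=> T1 T2.
    have : a * enorm (h *: - g + z - x0) <= a * (h * enorm (- g) + enorm (z - x0)).
      by rewrite ler_pM2l.
    lra.
  rewrite derive_grad // enormN -/g in key.
  have : enorm g * enorm g <= a * enorm g by rewrite -expr2; lra.
  rewrite ler_pM2r // => ga; lra.
exists (m - r / C) => x.
have P : forall a, 0 < a -> a < C^-1 -> m + a * (enorm x - r) <= V x.
  move=> a a0 aC; have [y [Ky Hy]] := main a x a0 aC.
  have [Hm Hr] := HK y Ky.
  have tri : enorm x - enorm y <= enorm (y - x).
    have := enormD (x - y) y; rewrite subrK -opprB enormN; lra.
  have : a * (enorm x - r) <= a * enorm (y - x) by rewrite ler_pM2l //; lra.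
  lra.
have kC : C^-1 * C = 1 by rewrite mulVf // gt_eqF.
have k0 : 0 < C^-1 by rewrite invr_gt0.
set D := enorm x - r.
have -> : C^-1 * enorm x + (m - r / C) = m + C^-1 * D by rewrite /D; field; rewrite gt_eqF.
case: (leP D 0) => D0.
  have h1 : 0 < C^-1 / 2 by rewrite divr_gt0.
  have h2 : C^-1 / 2 < C^-1 by lra.
  have := P (C^-1 / 2) h1 h2.
  have : C^-1 * D <= C^-1 / 2 * D by apply: ler_wnM2r => //; lra.
  rewrite -/D; lra.
apply/ler_addgt0Pr => e e0.
have eC : 0 < e * C by rewrite mulr_gt0.
have Dp : 0 < D + e * C by lra.
pose t := e / (D + e * C).
have t0 : 0 < t by rewrite divr_gt0.
have tk : t < C^-1.
  rewrite /t ltr_pdivrMr // mulrDr (mulrC e C) mulrA kC mul1r.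
  have : 0 < C^-1 * D by rewrite mulr_gt0.
  lra.
have a1 : 0 < C^-1 - t by lra.
have a2 : C^-1 - t < C^-1 by lra.
have := P (C^-1 - t) a1 a2.
have tD : t * D <= e.
  rewrite /t mulrAC ler_pdivrMr // ler_pM2l //; lra.
rewrite -/D mulrBl; lra.
Qed.
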